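(* Let $L$ be an $n\times n$ nonsingular M-matrix with integer entries. A vector $f\in\mathbb{Z}^n$ with $f\ge 0$ is $z$-superstable with respect to $L$ if and only if $f$ is the minimizer of $\min_{g\sim f,\ g\ge 0}E(g)$ (minimum over $g\in\mathbb{Z}^n$).
   Context: A Z-matrix is a square real matrix whose off-diagonal entries are all $\le 0$. A nonsingular M-matrix is a Z-matrix $L$ that is invertible with $L^{-1}$ having all entries nonnegative. Vector inequalities are entrywise. For $f,g\in\mathbb{Z}^n$, $f\sim g$ means $g-f=Lz$ for some $z\in\mathbb{Z}^n$. For $q\in\mathbb{Z}^n$, $E(q)=\|L^{-1}q\|_2^2$ with $\|v\|_2^2=v\cdot v$. A vector $f\in\mathbb{Z}^n$ with $f\ge 0$ is $z$-superstable with respect to $L$ if for every $z\in\mathbb{Z}^n$ with $z\ge0$ and $z\ne0$ there exists $i$ with $f_i-(Lz)_i<0$. *)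

(* Defs.v *)
From HB Require Import structures.
From mathcomp Require Import all_boot all_order all_algebra.
Set Implicit Arguments. Unset Strict Implicit. Unset Printing Implicit Defensive.
Import Order.TTheory GRing.Theory Num.Theory.
Local Open Scope ring_scope.

Definition toQ (m n : nat) (A : 'M[int]_(m, n)) : 'M[rat]_(m, n) :=
  map_mx (fun x : int => x%:~R) A.

Definition Zmatrix (n : nat) (L : 'M[int]_n) : Prop :=
  forall i j : 'I_n, i != j -> L i j <= 0.

Definition nonsingular_Mmatrix (n : nat) (L : 'M[int]_n) : Prop :=
  Zmatrix L /\ toQ L \in unitmx /\
  forall i j : 'I_n, 0 <= invmx (toQ L) i j.

Definition vge0 (n : nat) (v : 'cV[int]_n) : Prop := forall i : 'I_n, 0 <= v i 0.

Definition equiv_L (n : nat) (L : 'M[int]_n) (f g : 'cV[int]_n) : Prop :=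
  exists z : 'cV[int]_n, g - f = L *m z.

Definition energy (n : nat) (L : 'M[int]_n) (q : 'cV[int]_n) : rat :=
  \sum_(i < n) ((invmx (toQ L) *m toQ q) i 0) ^+ 2.

Definition z_superstable (n : nat) (L : 'M[int]_n) (f : 'cV[int]_n) : Prop :=
  vge0 f /\
  forall z : 'cV[int]_n, vge0 z -> z != 0 ->
    exists i : 'I_n, f i 0 - (L *m z) i 0 < 0.

(* f is THE minimizer of E over {g | g ~ f, g >= 0}: f itself is admissible and
   every other admissible g has strictly larger energy. *)
Definition is_energy_minimizer (n : nat) (L : 'M[int]_n) (f : 'cV[int]_n) : Prop :=
  vge0 f /\
  forall g : 'cV[int]_n, equiv_L L f g -> vge0 g -> g != f ->
    energy L f < energy L g.

(* Main.v *)
Require Import Defs.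
From HB Require Import structures.
From mathcomp Require Import all_boot all_order all_algebra.
From mathcomp Require Import lra.
Import Order.TTheory GRing.Theory Num.Theory.
Set Implicit Arguments.
Local Open Scope ring_scope.
Lemma toQM n (A : 'M[int]_n) (B : 'cV[int]_n) : toQ (A *m B) = toQ A *m toQ B.
Proof. by rewrite /toQ map_mxM. Qed.
Lemma toQD n (A B : 'cV[int]_n) : toQ (A + B) = toQ A + toQ B.
Proof. by rewrite /toQ map_mxD. Qed.

Section S.
Variables (n : nat) (L : 'M[int]_n).
Hypothesis H : nonsingular_Mmatrix L.
Let M := invmx (toQ L).

Lemma Mnonneg (v : 'cV[int]_n) : vge0 v -> forall i, 0 <= (M *m toQ v) i 0.
Proof.
move=> hv i; rewrite mxE; apply: sumr_ge0 => j _; apply: mulr_ge0.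
  by case: H => _ [_ ->].
by rewrite /toQ mxE ler0z; exact: hv.
Qed.

Lemma Mcancel (v : 'cV[rat]_n) : M *m (toQ L *m v) = v.
Proof. by rewrite /M mulKmx //; case: H => _ []. Qed.

Lemma Linj (z : 'cV[int]_n) : L *m z = 0 -> z = 0.
Proof.
move=> h; have h1 : toQ (L *m z) = 0 by rewrite h /toQ map_mx0.
rewrite toQM in h1; have h2 := Mcancel (toQ z); rewrite h1 mulmx0 in h2.
apply/matrixP => i j; have := congr1 (fun A : 'cV[rat]_n => A i j) h2.
by rewrite !mxE => /esym/eqP; rewrite intr_eq0 => /eqP.
Qed.

Lemma Lrow_le0 (v : 'cV[int]_n) i : vge0 v -> v i 0 = 0 -> (L *m v) i 0 <= 0.
Proof.
move=> hv hi; rewrite mxE; apply: sumr_le0 => j _.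
case: (eqVneq i j) => [<-|ne]; first by rewrite hi mulr0.
apply: mulr_le0_ge0; last exact: hv.
by case: H => hZ _; apply: hZ.
Qed.

Lemma energy_shift (f z : 'cV[int]_n) : energy L (f + L *m z) =
  \sum_(i < n) ((M *m toQ f) i 0 + (toQ z) i 0) ^+ 2.
Proof.
rewrite /energy toQD toQM mulmxDr Mcancel; apply: eq_bigr => i _.
by rewrite mxE.
Qed.
Lemma Mshift (f z : 'cV[int]_n) i : (M *m toQ (f + L *m z)) i 0 =
  (M *m toQ f) i 0 + (toQ z) i 0.
Proof. by rewrite toQD toQM mulmxDr Mcancel mxE. Qed.
End S.

Lemma entB m k (A B : 'M[int]_(m,k)) i j : (A - B) i j = A i j - B i j.
Proof. by rewrite !mxE. Qed.

Theorem mainTheorem5 (n : nat) (L : 'M[int]_n) (f : 'cV[int]_n) :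
  nonsingular_Mmatrix L -> vge0 f ->
  (z_superstable L f <-> is_energy_minimizer L f).
Proof.
move=> hL hf; split.
- case=> _ hS; split=> // g [z hz] hg hne.
  have eg : g = f + L *m z by rewrite -hz addrC subrK.
  pose p := \col_i Num.max (z i 0) 0; pose q := \col_i Num.max (- z i 0) 0.
  have zpq : z = p - q.
    apply/matrixP => i j; rewrite !mxE (ord1 j).
    have [h|h] := lerP 0 (z i 0).
      by rewrite max_r ?subr0 // oppr_le0.
    by rewrite max_l ?sub0r ?opprK // oppr_ge0 ltW.
  have hp0 : vge0 p by move=> i; rewrite mxE le_max lexx orbT.
  have hq0 : vge0 q by move=> i; rewrite mxE le_max lexx orbT.
  have hfq : f - L *m q = g - L *m p by rewrite eg zpq mulmxBr addrA addrAC addrK.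
  have hfq0 : forall i, 0 <= (f - L *m q) i 0.
    move=> i; have [h|h] := lerP 0 (z i 0).
      have h1 := @Lrow_le0 _ _ hL q i hq0.
      rewrite entB; have := hf i; have : q i 0 = 0.
        by rewrite mxE; apply/max_r; rewrite oppr_le0.
      move=> /h1; lra.
    have h1 := @Lrow_le0 _ _ hL p i hp0.
    rewrite hfq entB; have := hg i; have : p i 0 = 0.
      by rewrite mxE; apply/max_r; apply: ltW.
    move=> /h1; lra.
  have q0 : q = 0.
    case: (eqVneq q 0) => [//|qn0].
    have [i hi] := hS q hq0 qn0.
    by have := hfq0 i; rewrite entB leNgt hi.
  have zp : z = p by rewrite zpq q0 subr0.
  have hz0 : vge0 z by rewrite zp.
  have hzn : z != 0.
    by apply/eqP => z0; move/eqP: hne; apply; rewrite eg z0 mulmx0 addr0.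
  have [k hk] : exists k, z k 0 != 0.
    case: (boolP [exists k, z k 0 != 0]) => [/existsP //|/existsPn hn].
    exfalso; move/eqP: hzn; apply; apply/matrixP => i j.
    by rewrite (ord1 j) mxE; move: (hn i); rewrite negbK => /eqP.
  rewrite eg energy_shift // /energy.
  rewrite (bigD1 k) //= [X in _ < X](bigD1 k) //=.
  apply: ltr_leD.
    have a0 := Mnonneg hL hf k.
    have : 0 < toQ z k 0 by rewrite /toQ mxE ltr0z lt_def hk hz0.
    move: a0; set a := (_ *m _) k 0; set b := toQ z k 0 => *; nra.
  apply: ler_sum => i _.
  have a0 := Mnonneg hL hf i.
  have : 0 <= toQ z i 0 by rewrite /toQ mxE ler0z hz0.
  move: a0; set a := (_ *m _) i 0; set b := toQ z i 0 => *; nra.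
- case=> _ hM; split => // z hz hzn.
  case: (boolP [exists i, f i 0 - (L *m z) i 0 < 0]) => [/existsP //|/existsPn hn].
  exfalso.
  set g := f - L *m z.
  have hg : vge0 g by move=> i; rewrite /g entB leNgt; exact: hn i.
  have eq : g = f + L *m (- z) by rewrite mulmxN.
  have hgf : g != f.
    apply/eqP => e; move/eqP: hzn; apply; apply: (Linj hL).
    have : f - (f - L *m z) = L *m z by rewrite opprB addrC subrK.
    by rewrite -/g e subrr => <-.
  have heq : equiv_L L f g by exists (- z); rewrite eq addrAC subrr add0r.
  have := hM g heq hg hgf.
  have -> : energy L g = \sum_(i < n) ((invmx (toQ L) *m toQ g) i 0) ^+ 2 by [].
  rewrite ltNge => /negP; apply.
  rewrite /energy; apply: ler_sum => i _.
  have hgi := Mnonneg hL hg i.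
  rewrite eq Mshift // in hgi *.
  have : toQ (- z) i 0 <= 0 by rewrite /toQ !mxE rmorphN oppr_le0 ler0z; exact: hz.
  move: hgi; set a := (_ *m _) i 0; set b := toQ (- z) i 0 => *; nra.
Qed.
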